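(* Let $\mathbb{X},\mathbb{Y}$ be real normed linear spaces and let $F$ be a $k$-face of $B_{\mathbb{X}}$ for some $k\in\mathbb{N}$. If $T\in\mathbb{L}(\mathbb{X},\mathbb{Y})$ preserves TEA pairs contained in $F$ (i.e. for all $x,y\in F$, $(Tx,Ty)$ is a TEA pair in $\mathbb{Y}$), then either $T(F)=\{0\}$ or $\mathrm{Int}_r F\cap\ker T=\emptyset$.
   Context: A face of $B_{\mathbb{X}}$ is a nonempty convex subset $F\subset S_{\mathbb{X}}$ such that whenever $x_1,x_2\in S_{\mathbb{X}}$, $0<t<1$ and $(1-t)x_1+tx_2\in F$, then $x_1,x_2\in F$. $\mathrm{aff}(U)$ is the affine hull of $U$ and $\mathrm{Int}_r U=\{x\in U: \exists\varepsilon>0,\ \mathrm{aff}(U)\cap B(x,\varepsilon)\subset U\}$ is the relative interior. A $k$-face is a face whose affine hull has dimension $k$. $(x,y)$ is a TEA pair if $\|x+y\|=\|x\|+\|y\|$. *)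

(* Defs.v *)
From HB Require Import structures.
From mathcomp Require Import all_boot all_order all_algebra.
From mathcomp Require Import all_classical all_reals all_analysis.
Set Implicit Arguments. Unset Strict Implicit. Unset Printing Implicit Defensive.
Import Order.TTheory GRing.Theory Num.Theory.
Import numFieldNormedType.Exports.
Local Open Scope classical_set_scope.
Local Open Scope ring_scope.

Section Defs.
Context {R : realType} {X : normedModType R}.

Definition unit_sphere : set X := [set x | `|x| = 1].

Definition convex_set (F : set X) : Prop :=
  forall x y t, F x -> F y -> 0 <= t <= 1 -> F ((1 - t) *: x + t *: y).

Definition is_face (F : set X) : Prop :=
  [/\ F !=set0, F `<=` unit_sphere, convex_set F &
     forall x1 x2 t, unit_sphere x1 -> unit_sphere x2 -> 0 < t < 1 ->
       F ((1 - t) *: x1 + t *: x2) -> F x1 /\ F x2].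

Definition aff (U : set X) : set X :=
  [set z | exists n (p : 'I_n -> X) (c : 'I_n -> R),
      [/\ forall i, U (p i), \sum_(i < n) c i = 1 & z = \sum_(i < n) c i *: p i]].

Definition lin_indep (k : nat) (v : 'I_k -> X) : Prop :=
  forall c : 'I_k -> R, \sum_(i < k) c i *: v i = 0 -> forall i, c i = 0.

Definition affine_dim (A : set X) (k : nat) : Prop :=
  exists (x0 : X) (v : 'I_k -> X), lin_indep v /\
    A = [set x0 + \sum_(i < k) c i *: v i | c in [set: 'I_k -> R]].

Definition is_k_face (k : nat) (F : set X) : Prop :=
  is_face F /\ affine_dim (aff F) k.

Definition rel_int (U : set X) : set X :=
  [set x | U x /\ exists2 e : R, 0 < e & aff U `&` ball x e `<=` U].

End Defs.

Definition TEA {R : realType} {Y : normedModType R} (x y : Y) : Prop :=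
  `|x + y| = `|x| + `|y|.

(* Main.v *)
Require Import Defs.
From HB Require Import structures.
From mathcomp Require Import all_boot all_order all_algebra.
From mathcomp Require Import all_classical all_reals all_analysis.
From mathcomp Require Import lra.
Import Order.TTheory GRing.Theory Num.Theory.
Import numFieldNormedType.Exports.
Local Open Scope classical_set_scope.
Local Open Scope ring_scope.

Theorem mainTheorem10 (R : realType) (X Y : normedModType R) (k : nat)
  (F : set X) (T : {linear X -> Y}) :
  is_k_face k F ->
  continuous T ->
  (forall x y, F x -> F y -> TEA (T x) (T y)) ->
  T @` F = [set 0] \/ rel_int F `&` (T @^-1` [set 0]) = set0.
Proof.
move=> [[[y0 Fy0] _ _ _] _] _ HT.
have [[y Fy Tyn]|nex] := pselect (exists2 y, F y & T y != 0); last first.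
  have all0 : forall y, F y -> T y = 0.
    by move=> y Fy; apply/eqP; apply/negPn/negP => H; apply: nex; exists y.
  left; apply/seteqP; split => [_ [x Fx <-]|_ ->]; first by rewrite /= all0.
  by exists y0 => //; rewrite all0.
right; apply/seteqP; split => // z [[Fz [e e0 He]] /= Tz].
set d := `|z - y|.
have d0 : 0 <= d by rewrite normr_ge0.
set t := e / (2 * (e + d)).
have ed0 : 0 < e + d by lra.
have t0 : 0 < t by rewrite divr_gt0 // mulr_gt0.
have t1 : t < 1.
  by rewrite ltr_pdivrMr ?mulr_gt0 //; lra.
have td : t * d < e.
  rewrite /t mulrAC ltr_pdivrMr ?mulr_gt0 //.
  have : 0 <= e * d by rewrite mulr_ge0 // ltW.
  nra.
set w := (1 + t) *: z + (- t) *: y.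
have Fw : F w.
  apply: He; split.
    exists 2%N, (fun i : 'I_2 => if val i == 0%N then z else y),
      (fun i : 'I_2 => if val i == 0%N then 1 + t else - t).
    split; first by move=> i; case: ifP.
      by rewrite !big_ord_recr big_ord0 /= add0r; lra.
    by rewrite !big_ord_recr big_ord0 /= add0r.
  rewrite -ball_normE /ball_ /= /w.
  have -> : z - ((1 + t) *: z + - t *: y) = t *: (y - z).
    by rewrite scalerDl scale1r scalerBr scaleNr opprD opprK opprD !addrA addrN add0r addrC.
  by rewrite normrZ gtr0_norm // distrC.
have Tw : T w = (- t) *: T y.
  by rewrite /w linearD !linearZ /= Tz scaler0 add0r.
have := HT w y Fw Fy; rewrite /TEA Tw.
have -> : - t *: T y + T y = (1 - t) *: T y.
  by rewrite scalerBl scale1r scaleNr addrC.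
rewrite !normrZ gtr0_norm ?subr_gt0 // normrN gtr0_norm //.
move: (normr_gt0 (T y)); rewrite Tyn => n0.
set n := `|T y|.
have tn : 0 < t * n by rewrite mulr_gt0.
move=> h; rewrite mulrBl mul1r in h.
move: tn h; set a := t * n; clear; move=> tn h; lra.
Qed.
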